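(* Consider the extended networked closed-loop system (with state feedback) described in the context. Assume: $Q,R,T$ are positive definite; $(Q^{1/2},A)$ is observable; $\rho(A-BK)<1$ and $\rho(A-B\bar K)<1$; $P=(A-B\bar K)^\top P(A-B\bar K)+Q+\bar K^\top R\bar K$; and the network satisfies $\mathrm{Prob}\big(\bigcap_{t\ge k}\{\gamma_{t-1}\theta_t=0\}\big)=0$ for all $k\ge0$. Suppose there exists $k_0$ such that $\gamma_{k_0-1}=1$, $\theta_{k_0}=1$, $x(k_0)-x_n(k_0)\in\mathbb{Z}_K$, and the extended MPC optimization problem is feasible. If the consistent actuator with the nominal state update and the ancillary controller are used, then the extended MPC optimization problem is feasible and $x(k)\in\mathbb{X}$ and $u(k)\in\mathbb{U}$ for all $k\ge k_0$.
   Context: Plant: $x(k+1)=Ax(k)+Bu(k)+w(k)$ with $x(k)\in\mathbb{R}^{n_x}$, $u(k)\in\mathbb{R}^{n_u}$, $(A,B)$ stabilizable, and $w(k)\in\mathbb{W}=\{w: H_w w\le h_w\}$ for all $k$, where $\mathbb{W}$ is compact and contains the origin in its interior. State and input constraint sets $\mathbb{X}=\{x:H_x x\le h_x\}$, $\mathbb{U}=\{u:H_u u\le h_u\}$ are bounded and contain the origin in their interior. $\oplus$ is the Minkowski sum, $\ominus$ the Pontryagin difference, $M\mathbb{P}=\{Mp:p\in\mathbb{P}\}$. Network: binary variables $\theta_k$ ($=1$ iff the packet $U_k$ sent by the remote controller at time $k$ is received by the plant) and $\gamma_k$ ($=1$ iff the packet $X_k$ sent by the plant at time $k$ is received by the controller).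 Sets: $\mathbb{Z}_K=\bigoplus_{i=0}^\infty (A-BK)^i\mathbb{W}$; $\mathbb{X}_c=\mathbb{X}\ominus\mathbb{Z}_K$, $\mathbb{U}_c=\mathbb{U}\ominus(-K)\mathbb{Z}_K$. With $x_a=(x_n,\bar x,\bar u)$ and $A_a=\begin{bmatrix}A-B\bar K & B\bar K & B\\ 0& I&0\\0&0&I\end{bmatrix}$, $X_{f,\bar K}=\{x_a: A_a^k x_a\in\mathbb{X}_{a,\bar K}\ \forall k\ge0\}$ where $\mathbb{X}_{a,\bar K}=\{x_a: x_n\in\mathbb{X}_c,\ \bar u-\bar K(x_n-\bar x)\in\mathbb{U}_c\}$; for fixed $\lambda\in(0,1)$, $X^\lambda_{f,\bar K}=X_{f,\bar K}\cap\{(x_n,\bar x,\bar u):\bar x\in\lambda\mathbb{X}_c,\ \bar u\in\lambda\mathbb{U}_c\}$. Extended remote MPC at time $k$ (horizon $N$, reference $x_r$): minimize over $\mathbf{x}(0)$ (when free), $\mathbf{u}(0),\dots,\mathbf{u}(N-1),\bar x,\bar u$ the cost $\sum_{i=0}^{N-1}(\|\mathbf{x}(i)-\bar x\|_Q^2+\|\mathbf{u}(i)-\bar u\|_R^2)+\|\mathbf{x}(N)-\bar x\|_P^2+\|\bar x-x_r\|_T^2$ subject to $\mathbf{x}(i+1)=A\mathbf{x}(i)+B\mathbf{u}(i)$, $\mathbf{x}(i)\in\mathbb{X}_c$, $\mathbf{u}(i)\in\mathbb{U}_c$ for $i=0,\dots,N-1$, $(\mathbf{x}(N),\bar x,\bar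 u)\in X^\lambda_{f,\bar K}$, $(A-I)\bar x+B\bar u=0$, and the initial condition: if $\gamma_{k-1}=1$, then $\{\hat x(k|k-1)\}\oplus\mathbb{W}\subseteq\{\mathbf{x}(0)\}\oplus\mathbb{Z}_K$; otherwise $\mathbf{x}(0)=\hat x(k|k-1)$. With optimal solution $\mathbf{x}^*_k,\mathbf{u}^*_k,\bar x^*_k,\bar u^*_k$, the controller sends $U_k=\{\mathbf{u}^*_k,\ \bar u^*_k+\bar K\bar x^*_k,\ \mathbf{x}^*_k(0),\ q_k\}$. Local side: $\Theta_k=\prod_{i=q_k+1}^k\theta_i$ if $\theta_k=1$ and $\Theta_k=0$ otherwise; $s_k=\Theta_k k+(1-\Theta_k)s_{k-1}$. Nominal state update: if $\Theta_k=1$, the nominal state is reset to $x_n(k)=\mathbf{x}^*_k(0)$. Consistent actuator: $u_n(k)=\mathbf{u}^*_{s_k}(k-s_k)$ if $k-s_k<N$, else $u_n(k)=\bar u^*_{s_k}+\bar K\bar x^*_{s_k}-\bar K x_n(k)$. Nominal model $x_n(k+1)=Ax_n(k)+Bu_n(k)$. Ancillary controller $u(k)=u_n(k)-K(x(k)-x_n(k))$. The plant sends $X_k=\{x(k),x_n(k),s_k\}$. Remote estimator: $\hat x(k+1|k)=A\hat x(k|k)+B\hat u(k|k)$ with $\hat x(k|k)=\gamma_k x(k)+(1-\gamma_k)\mathbf{x}^*_k(0)$, $\hat u(k|k)=\gamma_k u(k)+(1-\gamma_k)\mathbf{u}^*_k(0)$ (where $u(k)$ is computed remotely from the ancillary controller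 law), and $q_{k+1}=\gamma_k k+(1-\gamma_k)q_k$. *)

(* Defs.v *)
From HB Require Import structures.
From mathcomp Require Import all_boot all_order all_algebra.
From mathcomp Require Import all_classical all_reals all_analysis.
From mathcomp Require complex.
Import complex.ComplexField.
Set Implicit Arguments. Unset Strict Implicit. Unset Printing Implicit Defensive.
Import Order.TTheory GRing.Theory Num.Theory.
Import numFieldNormedType.Exports.
Local Open Scope ring_scope.
Local Open Scope classical_set_scope.

Section Defs.
Variable R : realType.

Definition polyh (p n : nat) (H : 'M[R]_(p, n)) (h : 'cV[R]_p) : set 'cV[R]_n :=
  [set v | forall i, (H *m v) i 0 <= h i 0].

Definition compact_cv (n : nat) (S : set 'cV[R]_n) : Prop :=
  compact (S : set 'M[R]_(n, 1)).

Definition zero_interior (n : nat) (S : set 'cV[R]_n) : Prop :=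
  interior (S : set 'M[R]_(n, 1)) 0.

Definition msum (n : nat) (S1 S2 : set 'cV[R]_n) : set 'cV[R]_n :=
  [set v | exists a b, S1 a /\ S2 b /\ v = a + b].
Definition pdiff (n : nat) (S1 S2 : set 'cV[R]_n) : set 'cV[R]_n :=
  [set v | forall b, S2 b -> S1 (v + b)].
Definition limage (m n : nat) (M : 'M[R]_(m, n)) (S : set 'cV[R]_n) : set 'cV[R]_m :=
  [set M *m v | v in S].
Definition sscale (n : nat) (l : R) (S : set 'cV[R]_n) : set 'cV[R]_n :=
  [set l *: v | v in S].

(* infinite Minkowski sum  \bigoplus_{i>=0} M^i S : all sums of the
   (convergent) series sum_i M^i w_i with w_i in S *)
Definition inf_msum (n : nat) (M : 'M[R]_n) (S : set 'cV[R]_n) : set 'cV[R]_n :=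
  [set z : 'cV[R]_n | exists w : nat -> 'cV[R]_n, (forall i, S (w i)) /\
     forall r c, (fun N : nat => \sum_(i < N) (M ^+ i *m w i) r c) @ \oo --> (z r c : R)].

(* spectral radius < 1: every (complex) eigenvalue has modulus < 1 *)
Definition schur_stable (n : nat) (M : 'M[R]_n) : Prop :=
  forall z : complex.complex R,
    eigenvalue (map_mx (fun x : R => complex.Complex x 0) M) z ->
    `|z| < 1.

Definition stabilizable (n m : nat) (A : 'M[R]_n) (B : 'M[R]_(n, m)) : Prop :=
  exists K : 'M[R]_(m, n), schur_stable (A - B *m K).

Definition posdef (n : nat) (Q : 'M[R]_n) : Prop :=
  Q^T = Q /\ forall x : 'cV[R]_n, x != 0 -> 0 < (x^T *m Q *m x) 0 0.

Definition possemidef (n : nat) (Q : 'M[R]_n) : Prop :=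
  Q^T = Q /\ forall x : 'cV[R]_n, 0 <= (x^T *m Q *m x) 0 0.

Definition observable (p n : nat) (C : 'M[R]_(p, n)) (A : 'M[R]_n) : Prop :=
  \rank (\mxcol_(i < n) (C *m A ^+ i)) = n.

(* (Q^{1/2}, A) observable, Q^{1/2} the symmetric PSD square root of Q *)
Definition sqrt_observable (n : nat) (Q A : 'M[R]_n) : Prop :=
  exists S : 'M[R]_n, possemidef S /\ S *m S = Q /\ observable S A.

Definition qnorm (n : nat) (M : 'M[R]_n) (v : 'cV[R]_n) : R := (v^T *m M *m v) 0 0.

Section Terminal.
Variables (nx nu : nat) (A : 'M[R]_nx) (B : 'M[R]_(nx, nu)) (Kb : 'M[R]_(nu, nx)).
Variables (Xc : set 'cV[R]_nx) (Uc : set 'cV[R]_nu).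

(* action of A_a on x_a = (x_n, xbar, ubar) *)
Definition aug_step (xa : 'cV[R]_nx * 'cV[R]_nx * 'cV[R]_nu) :=
  let: (xn, xb, ub) := xa in
  ((A - B *m Kb) *m xn + B *m Kb *m xb + B *m ub, xb, ub).

Definition Xa_set : set ('cV[R]_nx * 'cV[R]_nx * 'cV[R]_nu) :=
  [set xa | let: (xn, xb, ub) := xa in Xc xn /\ Uc (ub - Kb *m (xn - xb))].

Definition Xf_set : set ('cV[R]_nx * 'cV[R]_nx * 'cV[R]_nu) :=
  [set xa | forall k, Xa_set (iter k aug_step xa)].

Definition Xf_lambda (lam : R) : set ('cV[R]_nx * 'cV[R]_nx * 'cV[R]_nu) :=
  [set xa | Xf_set xa /\ sscale lam Xc xa.1.2 /\ sscale lam Uc xa.2].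
End Terminal.

Section MPC.
Variables (nx nu : nat) (A : 'M[R]_nx) (B : 'M[R]_(nx, nu)) (Kb : 'M[R]_(nu, nx)).
Variables (W ZK Xc : set 'cV[R]_nx) (Uc : set 'cV[R]_nu).
Variables (Q P T : 'M[R]_nx) (Rw : 'M[R]_nu) (xr : 'cV[R]_nx) (N : nat) (lam : R).

Fixpoint pred_traj (x0 : 'cV[R]_nx) (u : nat -> 'cV[R]_nu) (i : nat) : 'cV[R]_nx :=
  match i with
  | 0 => x0
  | i'.+1 => A *m pred_traj x0 u i' + B *m u i'
  end.

(* feasibility of the decision variables (x(0), u(0..N-1), xbar, ubar),
   given gamma_{k-1} and xhat(k|k-1) *)
Definition mpc_admissible (gprev : bool) (xhat : 'cV[R]_nx)
  (x0 : 'cV[R]_nx) (u : nat -> 'cV[R]_nu) (xb : 'cV[R]_nx) (ub : 'cV[R]_nu) : Prop :=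
  (forall i, (i < N)%N -> Xc (pred_traj x0 u i) /\ Uc (u i)) /\
  Xf_lambda A B Kb Xc Uc lam (pred_traj x0 u N, xb, ub) /\
  (A - 1%:M) *m xb + B *m ub = 0 /\
  (if gprev then
     msum [set xhat] W `<=` msum [set x0] ZK
   else x0 = xhat).

Definition mpc_cost (x0 : 'cV[R]_nx) (u : nat -> 'cV[R]_nu) (xb : 'cV[R]_nx) (ub : 'cV[R]_nu) : R :=
  \sum_(i < N) (qnorm Q (pred_traj x0 u i - xb) + qnorm Rw (u i - ub))
  + qnorm P (pred_traj x0 u N - xb) + qnorm T (xb - xr).

Definition mpc_feasible (gprev : bool) (xhat : 'cV[R]_nx) : Prop :=
  exists x0 u xb ub, mpc_admissible gprev xhat x0 u xb ub.

Definition mpc_optimal (gprev : bool) (xhat : 'cV[R]_nx)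
  (x0 : 'cV[R]_nx) (u : nat -> 'cV[R]_nu) (xb : 'cV[R]_nx) (ub : 'cV[R]_nu) : Prop :=
  mpc_admissible gprev xhat x0 u xb ub /\
  forall x0' u' xb' ub', mpc_admissible gprev xhat x0' u' xb' ub' ->
    mpc_cost x0 u xb ub <= mpc_cost x0' u' xb' ub'.
End MPC.

End Defs.

(* Theta_k = prod_{i=q_k+1}^{k} theta_i  if theta_k = 1, and 0 otherwise *)
Definition Theta_of (th : nat -> bool) (q k : nat) : bool :=
  th k && all th (iota q.+1 (k - q)).

(* Main.v *)
Require Import Defs.
From HB Require Import structures.
From mathcomp Require Import all_boot all_order all_algebra.
From mathcomp Require Import all_classical all_reals all_analysis.
From mathcomp Require Import zify.
Import Order.TTheory GRing.Theory Num.Theory.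
Import numFieldNormedType.Exports.
Local Open Scope ring_scope.
Local Open Scope classical_set_scope.

Lemma cvg_big_seq (R : realType) (I : Type) (r : seq I) (f : I -> nat -> R) (l : I -> R) :
  (forall j, (fun n : nat => f j n) @ \oo --> (l j : R)) ->
  (fun n : nat => \sum_(j <- r) f j n) @ \oo --> (\sum_(j <- r) l j : R).
Proof.
move=> H; elim: r => [|j r IH].
  rewrite big_nil; under eq_fun do rewrite big_nil; exact: cvg_cst.
rewrite big_cons; under eq_fun do rewrite big_cons.
exact: (cvgD (H j) IH).
Qed.

Lemma inf_msum_step (R : realType) (n : nat) (M : 'M[R]_n) (S : set 'cV[R]_n) z b :
  inf_msum M S z -> S b -> inf_msum M S (M *m z + b).
Proof.
case=> w [Sw Hw] Sb.
pose wp := fun i : nat => if i is i'.+1 then w i' else b.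
exists wp; split; first by case.
move=> r c.
rewrite -(cvg_shiftS (fun N : nat => \sum_(i < N) _)) /=.
have E : forall N : nat, \sum_(i < N.+1) (M ^+ i *m wp i) r c
   = b r c + \sum_(j < n) M r j * (\sum_(i < N) (M ^+ i *m w i) j c).
  move=> N; rewrite big_ord_recl /= expr0 mul1mx; congr (_ + _).
  under [RHS]eq_bigr => j _ do rewrite big_distrr /=.
  rewrite [RHS]exchange_big /=; apply: eq_bigr => i _.
  by rewrite /bump /= add1n add0n exprS -mulmxA mxE.
under eq_fun do rewrite E.
rewrite mxE addrC mxE.
apply: cvgD; first exact: cvg_cst.
apply: (@cvg_big_seq R _ _ (fun j N => M r j * \sum_(i < N) (M ^+ i *m w i) j c) (fun j => M r j * z j c)) => j.
exact: (cvgM (cvg_cst _) (Hw j c)).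
Qed.

Section Gen.
Variables (R : realType) (nx nu : nat) (A : 'M[R]_nx) (B : 'M[R]_(nx, nu)) (Kb : 'M[R]_(nu, nx)).
Variables (W ZK Xc : set 'cV[R]_nx) (Uc : set 'cV[R]_nu) (N : nat) (lam : R).

Definition ninp (us : nat -> 'cV[R]_nu) (xb : 'cV[R]_nx) (ub : 'cV[R]_nu) (i : nat) (x : 'cV[R]_nx) :=
  if (i < N)%N then us i else ub + Kb *m xb - Kb *m x.

Fixpoint ntr x0 us xb ub (i : nat) : 'cV[R]_nx :=
  match i with
  | 0 => x0
  | i'.+1 => A *m ntr x0 us xb ub i' + B *m ninp us xb ub i' (ntr x0 us xb ub i')
  end.

Lemma ntr_pred x0 u xb ub i : (i <= N)%N -> ntr x0 u xb ub i = pred_traj A B x0 u i.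
Proof.
elim: i => [//|i IH] Hi /=; rewrite IH ?(ltnW Hi) //.
by rewrite /ninp Hi.
Qed.

Lemma ntr_iter x0 u xb ub j k : (N <= j)%N ->
  iter k (aug_step A B Kb) (ntr x0 u xb ub j, xb, ub) = (ntr x0 u xb ub (j + k), xb, ub).
Proof.
move=> Hj; elim: k => [|k IH]; first by rewrite addn0.
rewrite iterS IH addnS /= /ninp.
have -> : (j + k < N)%N = false by apply/negbTE; rewrite -leqNgt; apply: leq_trans Hj (leq_addr _ _).
congr (_, _, _).
set t := ntr _ _ _ _ _.
rewrite mulmxBl !mulmxDr !mulmxA.
rewrite mulmxN mulmxA -!addrA; congr (_ + _); rewrite addrC (addrC (B *m Kb *m xb)). by rewrite addrA.
Qed.

Lemma adm_all g xh x0 u xb ub :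
  mpc_admissible A B Kb W ZK Xc Uc N lam g xh x0 u xb ub ->
  forall i, Xc (ntr x0 u xb ub i) /\ Uc (ninp u xb ub i (ntr x0 u xb ub i)).
Proof.
case=> Hc [[Hf _] _] i.
case: (ltnP i N) => Hi.
  by rewrite ntr_pred ?(ltnW Hi) // /ninp Hi; apply: Hc.
have := Hf (i - N)%N; rewrite -(ntr_pred x0 u xb ub) // ntr_iter // subnKC // /Xa_set /=.
case=> H1 H2; split=> //.
rewrite /ninp ltnNge Hi /=.
by move: H2; rewrite mulmxBr opprB addrA (addrC ub).
Qed.

Lemma pred_ntr x0 u xb ub j i :
  pred_traj A B (ntr x0 u xb ub j) (fun i => ninp u xb ub (j + i) (ntr x0 u xb ub (j + i))) i
  = ntr x0 u xb ub (j + i).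
Proof. by elim: i => [|i IH] /=; rewrite ?addn0 // IH addnS. Qed.

Lemma cand g xh x0 u xb ub (j : nat) (g' : bool) (xh' : 'cV[R]_nx) :
  mpc_admissible A B Kb W ZK Xc Uc N lam g xh x0 u xb ub ->
  (if g' then Defs.msum [set xh'] W `<=` Defs.msum [set ntr x0 u xb ub j] ZK
   else ntr x0 u xb ub j = xh') ->
  mpc_feasible A B Kb W ZK Xc Uc N lam g' xh'.
Proof.
move=> Had Hinit.
have Hall := @adm_all _ _ _ _ _ _ Had.
case: Had => _ [[Hf [Hs1 Hs2]] [Heq _]].
exists (ntr x0 u xb ub j), (fun i => ninp u xb ub (j + i) (ntr x0 u xb ub (j + i))), xb, ub.
split; first by move=> i _; rewrite pred_ntr; apply: Hall.
split; last split=> //.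
  split=> //; rewrite pred_ntr => k.
  have := Hf (j + k)%N.
  rewrite -(ntr_pred x0 u xb ub) // !ntr_iter ?leq_addl //.
  by rewrite addnA (addnC N j).
Qed.
End Gen.

Lemma err_eq (R : realType) (nx nu : nat) (A : 'M[R]_nx) (B : 'M[R]_(nx, nu)) (K : 'M[R]_(nu, nx))
  (x xn w : 'cV[R]_nx) (un : 'cV[R]_nu) :
  A *m x + B *m (un - K *m (x - xn)) + w = (A *m xn + B *m un) + ((A - B *m K) *m (x - xn) + w).
Proof.
rewrite mulmxBl !mulmxBr !mulmxA.
set a := A *m x; set e := A *m xn; set b := B *m un; set T := (_ - B *m K *m xn).
rewrite [RHS]addrA; congr (_ + w).
rewrite [e + b]addrC -!addrA (addrCA e) addNKr [LHS]addrCA. reflexivity.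
Qed.

Lemma Theta_down th q k : (q < k)%N -> Theta_of th q k.+1 -> Theta_of th q k.
Proof.
move=> Hq /andP [_ H]; rewrite /Theta_of.
move: H; rewrite (subSn (ltnW Hq)) -[(k - q).+1]addn1 iotaD all_cat => /andP [H _].
rewrite H andbT; apply: (allP H); rewrite mem_iota.
by rewrite Hq /=; lia.
Qed.

Lemma Theta_base (th : nat -> bool) (k : nat) : th k.+1 -> Theta_of th k k.+1.
Proof. by move=> H; rewrite /Theta_of subSnn /= H. Qed.
Theorem proposition3
  (R : realType) (nx nu pw px pu : nat)
  (A : 'M[R]_nx) (B : 'M[R]_(nx, nu))
  (Hw : 'M[R]_(pw, nx)) (hw : 'cV[R]_pw)
  (Hx : 'M[R]_(px, nx)) (hx : 'cV[R]_px)
  (Hu : 'M[R]_(pu, nu)) (hu : 'cV[R]_pu)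
  (K Kb : 'M[R]_(nu, nx)) (Q P T : 'M[R]_nx) (Rw : 'M[R]_nu)
  (xr : 'cV[R]_nx) (N : nat) (lam : R)
  (d : measure_display) (Omega : measurableType d) (Pr : probability Omega R)
  (gamma theta : Omega -> nat -> bool) :
  let W := polyh Hw hw in
  let X := polyh Hx hx in
  let U := polyh Hu hu in
  let ZK := inf_msum (A - B *m K) W in
  let Xc := pdiff X ZK in
  let Uc := pdiff U (limage (- K) ZK) in
  (* standing assumptions *)
  stabilizable A B ->
  compact_cv W -> zero_interior W ->
  bounded_set X -> zero_interior X ->
  bounded_set U -> zero_interior U ->
  (0 < N)%N -> 0 < lam < 1 ->
  (* assumptions of the proposition *)
  posdef Q -> posdef Rw -> posdef T ->
  sqrt_observable Q A ->
  schur_stable (A - B *m K) -> schur_stable (A - B *m Kb) ->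
  P = (A - B *m Kb)^T *m P *m (A - B *m Kb) + Q + Kb^T *m Rw *m Kb ->
  (forall t, measurable [set om | gamma om t]) ->
  (forall t, measurable [set om | theta om t]) ->
  (* Prob( /\_{t >= k} {gamma_{t-1} theta_t = 0} ) = 0, written with t = t'+1 *)
  (forall k : nat,
     Pr (\bigcap_(t in [set t : nat | (k <= t)%N])
           [set om | (gamma om t && theta om t.+1) = false]) = 0%E) ->
  forall (om : Omega)
    (x : nat -> 'cV[R]_nx) (u : nat -> 'cV[R]_nu) (w : nat -> 'cV[R]_nx)
    (xn : nat -> 'cV[R]_nx) (un : nat -> 'cV[R]_nu)
    (s q : nat -> nat)
    (xhat : nat -> 'cV[R]_nx)               (* xhat k = \hat x(k|k-1) *)
    (x0s : nat -> 'cV[R]_nx) (us : nat -> nat -> 'cV[R]_nu)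
    (xbs : nat -> 'cV[R]_nx) (ubs : nat -> 'cV[R]_nu),
  (* plant *)
  (forall k, W (w k)) ->
  (forall k, x k.+1 = A *m x k + B *m u k + w k) ->
  (* ancillary controller *)
  (forall k, u k = un k - K *m (x k - xn k)) ->
  (* consistent actuator *)
  (forall k, un k = if (k - s k < N)%N then us (s k) (k - s k)%N
                    else ubs (s k) + Kb *m xbs (s k) - Kb *m xn k) ->
  (* nominal state update and nominal model *)
  (forall k, xn k.+1 = if Theta_of (theta om) (q k.+1) k.+1 then x0s k.+1
                       else A *m xn k + B *m un k) ->
  (forall k, s k.+1 = if Theta_of (theta om) (q k.+1) k.+1 then k.+1 else s k) ->
  (* remote estimator *)
  (forall k, xhat k.+1 = A *m (if gamma om k then x k else x0s k)
                         + B *m (if gamma om k then u k else us k 0%N)) ->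
  (forall k, q k.+1 = if gamma om k then k else q k) ->
  (* extended remote MPC: optimal solution used whenever the problem is feasible *)
  (forall k, mpc_feasible A B Kb W ZK Xc Uc N lam (gamma om k) (xhat k.+1) ->
     mpc_optimal A B Kb W ZK Xc Uc Q P T Rw xr N lam (gamma om k) (xhat k.+1)
       (x0s k.+1) (us k.+1) (xbs k.+1) (ubs k.+1)) ->
  forall k0 : nat, (0 < k0)%N ->
  gamma om k0.-1 -> theta om k0 -> ZK (x k0 - xn k0) ->
  mpc_feasible A B Kb W ZK Xc Uc N lam (gamma om k0.-1) (xhat k0) ->
  forall k : nat, (k0 <= k)%N ->
    mpc_feasible A B Kb W ZK Xc Uc N lam (gamma om k.-1) (xhat k) /\ X (x k) /\ U (u k).
Proof.
move=> W X U ZK Xc Uc _ _ _ _ _ _ _ HN _ _ _ _ _ _ _ _ _ _ _.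
move=> om x u w xn un s q xhat x0s us xbs ubs Hwb Hxe Hue Hune Hxne Hse Hxhe Hqe Hopt.
move=> k0 Hk0 Hg0 Hth0 He0 Hf0.
pose adm j := mpc_admissible A B Kb W ZK Xc Uc N lam (gamma om j.-1) (xhat j)
   (x0s j) (us j) (xbs j) (ubs j).
pose feas j := mpc_feasible A B Kb W ZK Xc Uc N lam (gamma om j.-1) (xhat j).
have Hadm : forall j, (0 < j)%N -> feas j -> adm j.
  by move=> [//|j] _ /Hopt [].
pose plan (j : nat) := @ntr _ _ _ A B Kb N (x0s (s j)) (us (s j)) (xbs (s j)) (ubs (s j)) (j - s j).
pose Inv j := [/\ feas j, ZK (x j - xn j), (q j < j)%N, (s j <= j)%N & adm (s j) /\ xn j = plan j].
have HZ : forall j, ZK (x j - xn j) -> ZK (x j.+1 - (A *m xn j + B *m un j)).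
  move=> j Hej; rewrite Hxe Hue err_eq addrC addKr.
  exact: inf_msum_step.
have Hunj : forall j, un j = @ninp _ _ _ Kb N (us (s j)) (xbs (s j)) (ubs (s j)) (j - s j) (xn j).
  by move=> j; rewrite Hune.
have Hbase : Inv k0.
  have Ek : k0 = k0.-1.+1 by rewrite prednK.
  have Hqk : q k0 = k0.-1 by rewrite Ek Hqe -Ek Hg0.
  have HT : Theta_of (theta om) (q k0) k0 by rewrite Hqk Ek; apply: Theta_base; rewrite -Ek.
  have Hsk : s k0 = k0 by rewrite Ek Hse -Ek HT.
  have Hxk : xn k0 = x0s k0 by rewrite Ek Hxne -Ek HT.
  split=> //; first by rewrite Hqk prednK.
    by rewrite Hsk.
  rewrite /plan Hsk subnn; split=> //.
  exact: Hadm.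
have Hstep : forall k, (k0 <= k)%N -> Inv k -> Inv k.+1.
  move=> k Hk [Hfk Hek Hqk Hsk [Hads Hxnk]].
  have Hk1 : (0 < k)%N by apply: leq_trans Hk.
  set sk := s k in Hsk Hads Hxnk Hunj.
  have Hnom : A *m xn k + B *m un k = @ntr _ _ _ A B Kb N (x0s sk) (us sk) (xbs sk) (ubs sk) (k - sk).+1.
    by rewrite Hunj Hxnk.
  have Hfeas1 : feas k.+1.
    rewrite /feas /=; case Hg: (gamma om k).
    - apply: (@cand _ _ _ A B Kb W ZK Xc Uc N lam _ _ _ _ _ _ (k - sk).+1 true (xhat k.+1) Hads).
      rewrite -Hnom => v [a [b [Ha [Wb ->]]]].
      exists (A *m xn k + B *m un k), ((A - B *m K) *m (x k - xn k) + b).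
      split; first by [].
      split; first exact: inf_msum_step.
      by rewrite Ha Hxhe Hg Hue err_eq.
    - apply: (@cand _ _ _ A B Kb W ZK Xc Uc N lam _ _ _ _ _ _ 1 false (xhat k.+1) (Hadm k Hk1 Hfk)).
      by rewrite Hxhe Hg /= /ninp HN.
  have Hadm1 := Hadm k.+1 isT Hfeas1.
  have Hq1 : (q k.+1 < k.+1)%N by rewrite Hqe; case: ifP => _ //; apply: ltnW.
  case HT: (Theta_of (theta om) (q k.+1) k.+1).
  - have Hs1 : s k.+1 = k.+1 by rewrite Hse HT.
    have Hx1 : xn k.+1 = x0s k.+1 by rewrite Hxne HT.
    split => //.
    + rewrite Hx1; case Hg: (gamma om k).
      * case: Hadm1 => _ [_ [_ Hinit]]; rewrite /= Hg in Hinit.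
        have : Defs.msum [set xhat k.+1] W (x k.+1).
          exists (xhat k.+1), (w k); split => //; split => //.
          by rewrite Hxe Hxhe Hg.
        move/Hinit => [a [b [Ha [Zb ->]]]].
        by rewrite Ha addrC addKr.
      * have Hq' : q k.+1 = q k by rewrite Hqe Hg.
        rewrite Hq' in HT; have HTk := @Theta_down _ _ _ Hqk HT.
        have Ek : k = k.-1.+1 by rewrite prednK.
        have Hxk : xn k = x0s k by rewrite Ek Hxne -Ek HTk.
        have Hsk' : s k = k by rewrite Ek Hse -Ek HTk.
        case: Hadm1 => _ [_ [_ Hinit]]; rewrite /= Hg in Hinit.
        have Hun0 : un k = us k 0%N by rewrite Hune Hsk' subnn HN.
        rewrite Hinit Hxhe Hg.
        by move: (HZ k Hek); rewrite Hun0 Hxk.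
    + by rewrite Hs1.
    + rewrite Hs1; split => //.
      by rewrite /plan Hs1 subnn Hx1.
  - have Hs1 : s k.+1 = sk by rewrite Hse HT.
    have Hx1 : xn k.+1 = A *m xn k + B *m un k by rewrite Hxne HT.
    split => //.
    + by rewrite Hx1; apply: HZ.
    + by rewrite Hs1 leqW.
    + rewrite Hs1; split => //.
      by rewrite /plan Hs1 Hx1 Hnom subSn.
move=> k Hk.
have HI : Inv k.
  rewrite -(subnKC Hk); elim: (k - k0)%N => [|dd IH]; first by rewrite addn0.
  by rewrite addnS; apply: Hstep => //; apply: leq_addr.
case: HI => Hf He _ _ [Ha Hxk].
have [HXc HUc] := @adm_all _ _ _ A B Kb W ZK Xc Uc N lam _ _ _ _ _ _ Ha (k - s k).
split => //; split.
  have HXc' : Xc (xn k) by rewrite Hxk; exact: HXc.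
  by have := HXc' _ He; rewrite addrC subrK.
have HUc' : Uc (un k) by rewrite Hunj Hxk; exact: HUc.
have := HUc' ((- K) *m (x k - xn k)) (ex_intro2 _ _ (x k - xn k) He erefl).
by rewrite mulNmx Hue.
Qed.
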